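(* Let $d\ge1$ and $n=2d+1$. (i) If $(0,g)$ is $d$-good for $\gamma(B_{n-2})$, then $(0,g)$ is also $d$-good for $\gamma(B_{n-1})$. (ii) If $(0,g)$ is $(d+1)$-good for $\gamma(B_{n-1})$, then $(0,g)$ is also $(d+1)$-good for $\gamma(B_n)$.
   Context: $B_n$ is the group of signed permutations of $\{\pm1,\dots,\pm n\}$; with $\sigma_0=0$, $\mathrm{des}_B(\sigma)=|\{i\in\{0,\dots,n-1\}:\sigma_i>\sigma_{i+1}\}|$, $B_n(t)=\sum_{\sigma\in B_n}t^{\mathrm{des}_B(\sigma)}=\sum_{i=0}^{\lfloor n/2\rfloor}\gamma_i(B_n)t^i(1+t)^{n-2i}$, and $\gamma(B_n)=(\gamma_0(B_n),\dots,\gamma_{\lfloor n/2\rfloor}(B_n))$. A simplicial complex is $k$-colorable if its vertices can be colored with $k$ colors so that every face has distinctly colored vertices; a $k$-FFK-vector is the $f$-vector $(f_0,f_1,\dots)$ ($f_i$ = number of faces with $i$ vertices, $f_0=1$) of some $k$-colorable complex. Vectors of different lengths are compared and added after padding with zeros on the right. Goodness: let $f=(f_0,\dots,f_m)$ be a vector of nonnegative integers and $g=(g_1,\dots,g_\ell)$. (a) $(0,g)$ is $(m+1)$-good for $f$ if $\ell=m+1$, $g_{m+1}\ne0$, and there are $m$-FFK-vectors $f^{(1)},\dots,f^{(k)}$, each of the form $(f^{(j)}_0,\dots,f^{(j)}_m)$ with $f^{(j)}_i\le f_i$ for all $i$, such that $g_{i+1}=\sum_j f^{(j)}_i$ for $0\le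 i\le m$. (b) $(0,g)$ is $m$-good for $f$ if $\ell=m$, $g_m\neq0$, and there are $(m-1)$-FFK-vectors $f^{(1)},\dots,f^{(k)}$ of the form $(f^{(j)}_0,\dots,f^{(j)}_{m-1})$ with $f_i\ge(i+1)f^{(j)}_i$ for all $i,j$, such that $g_{i+1}=\sum_jf^{(j)}_i$ for $0\le i\le m-1$. Here $\gamma(B_{2d-1})$ has length $d$ and $\gamma(B_{2d}),\gamma(B_{2d+1})$ have length $d+1$. *)

(* Defs.v *)
From HB Require Import structures.
From mathcomp Require Import all_boot all_order all_algebra all_fingroup.
From Stdlib Require Import ClassicalEpsilon.
Set Implicit Arguments. Unset Strict Implicit. Unset Printing Implicit Defensive.
Import Order.TTheory GRing.Theory Num.Theory.

(* A signed permutation of {+-1,...,+-n} is encoded by a pair (s, p):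
   sigma_(j+1) = (-1)^(s j) * (p j + 1) for j : 'I_n (bijective encoding). *)
Definition signed_perm (n : nat) : finType :=
  ({ffun 'I_n -> bool} * {perm 'I_n})%type.

Definition sp_val n (x : signed_perm n) (j : 'I_n) : int :=
  ((-1) ^+ x.1 j * ((x.2 j).+1)%:Z)%R.

Definition sigmaB n (x : signed_perm n) (k : nat) : int :=
  nth 0%R (0%R :: [seq sp_val x j | j <- enum 'I_n]) k.

Definition desB n (x : signed_perm n) : nat :=
  count (fun i => (sigmaB x i.+1 < sigmaB x i)%R) (iota 0 n).

Definition Bpoly (n : nat) : {poly int} :=
  (\sum_(x : signed_perm n) 'X^(desB x))%R.

Definition is_gammaB (n : nat) (g : seq nat) : Prop :=
  size g = n./2.+1 /\
  Bpoly n = (\sum_(i < size g) (nth 0%N g i)%:R *: ('X^i * (1 + 'X) ^+ (n - 2 * i)))%R.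

Definition gammaB (n : nat) : seq nat :=
  epsilon (inhabits [::]) (is_gammaB n).

(* f (a finite sequence, padded with zeros on the right) is a k-FFK-vector:
   the f-vector (f_i = number of faces with i vertices) of a k-colorable
   simplicial complex K (containing the empty face, closed under subsets),
   vertex set 'I_N for some N. *)
Definition FFK (k : nat) (f : seq nat) : Prop :=
  exists (N : nat) (K : {set {set 'I_N}}) (c : 'I_N -> 'I_k),
    [/\ set0 \in K,
        (forall s t : {set 'I_N}, s \in K -> t \subset s -> t \in K),
        (forall s, s \in K -> {in s &, injective c}) &
        (forall i, nth 0 f i = #|[set s in K | #|s| == i]|)].

(* good L f g  :<->  (0,g) is L-good for f = (f_0,...,f_m) (m = size f - 1).
   Case (a): L = m+1;  case (b): L = m.  Indices padded with zeros. *)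
Definition good (L : nat) (f g : seq nat) : Prop :=
  (size f = L /\ size g = L /\ nth 0 g L.-1 != 0 /\
   exists fs : seq (seq nat),
     (forall fj, fj \in fs -> FFK L.-1 fj /\ forall i, nth 0 fj i <= nth 0 f i) /\
     (forall i, i <= L.-1 -> nth 0 g i = sumn [seq nth 0 fj i | fj <- fs]))
  \/
  (size f = L.+1 /\ size g = L /\ nth 0 g L.-1 != 0 /\
   exists fs : seq (seq nat),
     (forall fj, fj \in fs -> FFK L.-1 fj /\ forall i, i.+1 * nth 0 fj i <= nth 0 f i) /\
     (forall i, i <= L.-1 -> nth 0 g i = sumn [seq nth 0 fj i | fj <- fs])).

(* Main.v *)
Require Import Defs.
From mathcomp Require Import all_boot all_order all_algebra all_fingroup.
From mathcomp Require Import ring lra zify.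
From Stdlib Require Import ClassicalEpsilon.
Set Implicit Arguments. Unset Strict Implicit. Unset Printing Implicit Defensive.
Import Order.TTheory GRing.Theory Num.Theory.

Fixpoint des (s : seq int) : nat :=
  match s with
  | a :: ((b :: _) as t) => ((b < a)%R : nat) + des t
  | _ => 0
  end.

Lemma des_count (s : seq int) :
  count (fun i => (nth 0%R s i.+1 < nth 0%R s i)%R) (iota 0 (size s).-1) = des s.
Proof.
elim: s => [|a [|b t] IH] //=.
move: IH => /= <-; congr (_ + _).
by rewrite -(addn0 1) iotaDl count_map; apply: eq_count => i.
Qed.

Definition word n (x : signed_perm n) : seq int := [seq sp_val x j | j <- enum 'I_n].

Lemma desB_des n (x : signed_perm n) : desB x = des (0%R :: word x).
Proof.
rewrite -des_count /desB /= size_map size_enum_ord.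
by apply: eq_count => i.
Qed.

Definition ins (p : nat) (v : int) (w : seq int) := take p w ++ v :: drop p w.

Fixpoint L (n : nat) : seq (seq int) :=
  match n with
  | 0 => [:: [::]]
  | n'.+1 => [seq ins pv.1 pv.2 w | w <- L n',
               pv <- [seq (q, v) | q <- iota 0 n'.+1, v <- [:: Posz n'.+1; (- Posz n'.+1)%R]]]
  end.

Definition pvs n : seq (nat * int) :=
  [seq (q, v) | q <- iota 0 n.+1, v <- [:: Posz n.+1; (- Posz n.+1)%R]].

Lemma L_S n : L n.+1 = [seq ins pv.1 pv.2 w | w <- L n, pv <- pvs n].
Proof. by []. Qed.

Lemma size_L n : size (L n) = (2 ^ n * n`!)%N.
Proof.
elim: n => [|n IH] //.
rewrite L_S size_allpairs IH /pvs size_allpairs size_iota expnS factS /=; lia.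
Qed.

Definition valid n (w : seq int) := perm_eq [seq absz x | x <- w] (iota 1 n).

Lemma valid_L n w : valid n w -> w \in L n.
Proof.
elim: n w => [|n IH] w.
  by rewrite /valid => /perm_size; case: w.
rewrite /valid => Hw.
set m := [seq absz x | x <- w].
have Hin : n.+1 \in m by rewrite (perm_mem Hw) mem_iota; lia.
set p := index n.+1 m.
have Hp : (p < size w)%N by rewrite -(size_map absz) index_mem.
set v := nth 0%R w p.
have Hv : absz v = n.+1.
  by rewrite /v -(nth_map 0%R 0%N) // nth_index.
set w' := take p w ++ drop p.+1 w.
have Ew : w = ins p v w'.
  rewrite /ins /w' take_size_cat; last by rewrite size_take Hp.
  rewrite drop_size_cat; last by rewrite size_take Hp.
  by rewrite -drop_nth // cat_take_drop.
have Hw' : valid n w'.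
  rewrite /valid /w' map_cat map_take map_drop.
  have Em : m = take p m ++ n.+1 :: drop p.+1 m.
    by rewrite -{1}(cat_take_drop p m) (drop_nth 0%N) ?index_mem // nth_index.
  move: Hw; rewrite -/m {1}Em.
  rewrite -(addn1 n) iotaD /= -cat1s perm_catCA /= => H.
  have H2 : perm_eq (n.+1 :: (take p m ++ drop p.+1 m)) (n.+1 :: iota 1 n).
    rewrite addn1 add1n in H; apply: (perm_trans H).
    by rewrite -cat1s perm_catC.
  by rewrite perm_cons in H2.
rewrite Ew L_S.
suff Hpv : (p, v) \in pvs n.
  exact: (allpairs_f (fun w (pv : nat * int) => ins pv.1 pv.2 w) (IH _ Hw') Hpv).
apply: allpairs_f; first by rewrite mem_iota; move: Hp; rewrite -(size_map absz) (perm_size Hw) size_iota; lia.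
clear Ew; case: v Hv => k /= Hk; rewrite !inE; apply/orP; [left| right].
  by rewrite Hk.
by rewrite NegzE Hk.
Qed.

Lemma word_valid n (x : signed_perm n) : valid n (word x).
Proof.
rewrite /valid /word -map_comp.
have -> : [seq (absz \o sp_val x) j | j <- enum 'I_n] = [seq (x.2 j).+1 | j <- enum 'I_n].
  apply/eq_in_map => j _ /=; rewrite /sp_val.
  by case: (x.1 j) => /=; rewrite ?muln1 ?mul1n.
have -> : [seq (x.2 j).+1 | j <- enum 'I_n] = [seq i.+1 | i <- [seq val i | i <- [seq x.2 j | j <- enum 'I_n]]].
  by rewrite -!map_comp.
have -> : iota 1 n = [seq i.+1 | i <- [seq val i | i <- enum 'I_n]].
  by rewrite val_enum_ord; have := iotaDl 1 0 n; rewrite addn0 => ->; apply: eq_map => i; rewrite add1n.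
apply: perm_map; apply: perm_map.
apply: uniq_perm; first by rewrite map_inj_uniq ?enum_uniq //; apply: perm_inj.
  exact: enum_uniq.
by move=> j; rewrite mem_enum; apply/mapP; exists ((x.2)^-1 j)%g; rewrite ?mem_enum // permKV.
Qed.

Lemma word_inj n : injective (@word n).
Proof.
move=> [s1 p1] [s2 p2] /eq_in_map E.
have H : forall j, s1 j = s2 j /\ p1 j = p2 j.
  move=> j; have := E j; rewrite mem_enum => /(_ isT); rewrite /sp_val /=.
  case: (s1 j); case: (s2 j); rewrite /= ?mul1r ?mulN1r => h.
  - by split=> //; apply/val_inj; move/eqP: h; rewrite eqr_opp => /eqP [].
  - by exfalso; move: h; lia.
  - by exfalso; move: h; lia.
  - by split=> //; apply/val_inj; case: h.
congr pair; first by apply/ffunP => j; case: (H j).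
by apply/permP => j; case: (H j).
Qed.

Lemma perm_word_L n : perm_eq [seq word x | x <- enum (signed_perm n)] (L n).
Proof.
have U : uniq [seq word x | x <- enum (signed_perm n)].
  by rewrite map_inj_uniq ?enum_uniq //; apply: word_inj.
have S : {subset [seq word x | x <- enum (signed_perm n)] <= L n}.
  by move=> w /mapP [x _ ->]; apply: valid_L; apply: word_valid.
have Sz : size (L n) <= size [seq word x | x <- enum (signed_perm n)].
  rewrite size_L size_map -cardE /signed_perm card_prod card_ffun card_Sn card_bool card_ord.
  by [].
have [_ Hi] := uniq_min_size U S Sz.
apply: uniq_perm => //.
exact: leq_size_uniq U S Sz.
Qed.

Lemma Bpoly_L n : Bpoly n = (\sum_(w <- L n) 'X^(des (0%R :: w)))%R.
Proof.
rewrite /Bpoly -(perm_big _ (perm_word_L n)) big_map /=.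
rewrite -big_enum /=; apply: eq_bigr => x _; by rewrite desB_des.
Qed.

Local Open Scope ring_scope.

Lemma des_cons2 (a b : int) t : des [:: a, b & t] = (((b < a)%R : nat) + des (b :: t))%N.
Proof. by []. Qed.

Lemma ins_sum (M : int) a w : (forall x, x \in a :: w -> (-M < x < M)) ->
  (\sum_(q <- iota 0 (size w).+1) ('X^(des (a :: ins q M w)) + 'X^(des (a :: ins q (-M) w))))%R
  = ((2 * des (a :: w) + 1)%N)%:R * 'X^(des (a :: w))
    + (((2 * size w + 1)%N)%:R - ((2 * des (a :: w))%N)%:R) * 'X^((des (a :: w)).+1) :> {poly int}.
Proof.
elim: w a => [|b w IH] a Hb.
  have /andP [h1 h2] := Hb a (mem_head _ _).
  rewrite big_seq1 /ins /= .
  have -> : (M < a) = false by apply/negbTE; lia.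
  have -> : (- M < a) = true by lia.
  rewrite /=. ring.
have /andP [h1 h2] := Hb a (mem_head _ _).
have /andP [h3 h4] : -M < b < M by apply: Hb; rewrite !inE eqxx orbT.
have Hw : forall x, x \in b :: w -> (-M < x < M).
  by move=> x hx; apply: Hb; rewrite inE hx orbT.
rewrite (_ : iota 0 (size (b :: w)).+1 = 0 :: iota 1 (size w).+1) // big_cons.
have := iotaDl 1 0 (size w).+1; rewrite addn0 => ->; rewrite big_map.
rewrite (eq_bigr (fun q => 'X^(((b < a)%R : nat)) * ('X^(des (b :: ins q M w)) + 'X^(des (b :: ins q (-M) w))))); last first.
  by move=> q _; rewrite add1n mulrDr -!exprD.
rewrite -mulr_sumr IH //.
have -> : des (a :: ins 0 M (b :: w)) = (((M < a)%R : nat) + (((b < M)%R : nat) + des (b :: w)))%N by [].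
have -> : des (a :: ins 0 (-M) (b :: w)) = (((-M < a)%R : nat) + (((b < -M)%R : nat) + des (b :: w)))%N by [].
rewrite des_cons2 /=.
set k := des (b :: w).
have -> : (M < a) = false by apply/negbTE; lia.
have -> : (- M < a) = true by lia.
have -> : (b < M) = true by lia.
have -> : (b < - M) = false by apply/negbTE; lia.
case: (b < a) => /=; rewrite ?add0n ?add1n !exprS; ring.
Qed.

Definition T (n : nat) (p : {poly int}) : {poly int} :=
  p + ((2 * n + 1)%N)%:R * 'X * p + 2%:R * 'X * (1 - 'X) * p^`().

Lemma T_add n p q : T n (p + q) = T n p + T n q.
Proof. rewrite /T derivD; ring. Qed.

Lemma T_sum n (I : Type) (r : seq I) (F : I -> {poly int}) :
  T n (\sum_(i <- r) F i) = \sum_(i <- r) T n (F i).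
Proof.
elim: r => [|x r IH]; first by rewrite !big_nil /T deriv0; ring.
by rewrite !big_cons T_add IH.
Qed.

Lemma T_natmul n k p : T n (k%:R * p) = k%:R * T n p.
Proof.
rewrite /T derivM.
have -> : (k%:R : {poly int})^`() = 0 by rewrite -polyC_natr derivC.
ring.
Qed.

Lemma T_Xn n k : T n 'X^k = ((2 * k + 1)%N)%:R * 'X^k
    + (((2 * n + 1)%N)%:R - ((2 * k)%N)%:R) * 'X^(k.+1).
Proof.
rewrite /T derivXn; case: k => [|k] /=; first by rewrite mulr0n !expr0; ring.
rewrite -mulr_natl !exprS; ring.
Qed.

Lemma L_bound n w : w \in L n -> size w = n /\ (forall x, x \in w -> (- (n.+1)%:Z < x < (n.+1)%:Z)).
Proof.
rewrite -(perm_mem (perm_word_L n)) => /mapP [x _ ->].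
have V := word_valid x; split.
  by rewrite -(size_map absz) (perm_size V) size_iota.
move=> y hy; have : (absz y \in iota 1 n)%N by rewrite -(perm_mem V); apply: map_f.
rewrite mem_iota => h.
case: y {hy} h => k /= h; rewrite ?NegzE; lia.
Qed.

Definition P n : {poly int} := \sum_(w <- L n) 'X^(des (0 :: w)).

Lemma P_rec n : P n.+1 = T n (P n).
Proof.
rewrite /P L_S big_allpairs_dep T_sum; apply: eq_big_seq => w Hw.
have [Hs Hb] := L_bound Hw.
rewrite /pvs big_allpairs_dep.
have := @ins_sum (n.+1)%:Z 0 w.
rewrite Hs T_Xn => <-.
  by apply: eq_bigr => q _; rewrite !big_cons big_nil /= addr0.
move=> x; rewrite inE => /orP [/eqP -> | /Hb //]; lia.
Qed.

Fixpoint gm (n i : nat) : nat :=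
  match n with
  | 0 => (i == 0%N : nat)
  | n'.+1 => ((2 * i + 1) * gm n' i +
              match i with 0 => 0 | j.+1 => 4 * (n' - 2 * j) * gm n' j end)%N
  end.

Lemma gm0 n i : (n < 2 * i)%N -> gm n i = 0%N.
Proof.
elim: n i => [|n IH] i /= h; first by case: i h.
rewrite IH; last lia.
case: i h => [|j] h //=.
have -> : (n - 2 * j = 0)%N by lia.
by rewrite muln0 mul0n.
Qed.

Definition E n i : {poly int} := 'X^i * (1 + 'X) ^+ (n - 2 * i).

Definition S n : {poly int} := \sum_(i < n.+1) (gm n i)%:R * E n i.

Lemma T_E n i : (2 * i <= n)%N ->
  T n (E n i) = ((2 * i + 1)%N)%:R * E n.+1 i + ((4 * (n - 2 * i))%N)%:R * E n.+1 i.+1.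
Proof.
move=> h; rewrite /E /T.
have [m Hm] : exists m, n = (2 * i + m)%N by exists (n - 2 * i)%N; lia.
subst n.
have -> : (2 * i + m - 2 * i = m)%N by lia.
have -> : ((2 * i + m).+1 - 2 * i = m.+1)%N by lia.
have -> : ((2 * i + m).+1 - 2 * i.+1 = m.-1)%N by lia.
rewrite derivM derivXn deriv_exp derivD derivX -polyC1 derivC polyC1 add0r mul1r.
rewrite -(mulr_natl _ i) -(mulr_natl _ m).
clear h; case: i => [|i]; case: m => [|m] /=; rewrite ?expr0 ?exprS; ring.
Qed.

Lemma S_rec n : S n.+1 = T n (S n).
Proof.
rewrite /S T_sum.
have H : forall i : 'I_n.+1, T n ((gm n i)%:R * E n i) =
   ((2 * i + 1) * gm n i)%N%:R * E n.+1 i + ((4 * (n - 2 * i)) * gm n i)%N%:R * E n.+1 i.+1.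
  move=> i; rewrite T_natmul; case: (leqP (2 * i) n) => h.
    rewrite T_E // mulrDr !natrM; ring.
  by rewrite gm0 // !muln0 !mul0r addr0.
rewrite (eq_bigr _ (fun i _ => H i)) big_split /=.
under eq_bigr => i _ do rewrite /= natrD mulrDl.
rewrite big_split /= big_ord_recr /= gm0 ?muln0 ?mul0r ?addr0; last lia.
congr (_ + _).
rewrite big_ord_recl /= mul0r add0r.
by apply: eq_bigr => i _; rewrite /bump /=.
Qed.

Lemma P_S n : P n = S n.
Proof.
elim: n => [|n IH]; last by rewrite P_rec S_rec IH.
by rewrite /P /S /= big_seq1 big_ord1 /E /= expr0 mulr1 mul1r.
Qed.

Lemma uniq_coef (s n : nat) (c : nat -> int) : (2 * s <= n.+2)%N ->
  \sum_(i < s) c i *: E n i = 0 -> forall i, (i < s)%N -> c i = 0.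
Proof.
elim: s n c => [|s IH] n c hs Hsum i hi; first by [].
rewrite big_ord_recl /= in Hsum.
have Hc0 : c 0%N = 0.
  have := congr1 (fun p => p.[0]) Hsum.
  rewrite hornerD horner_sum /E hornerZ hornerM !hornerE /= expr1n !mulr1.
  rewrite big1 ?addr0 // => j _.
  by rewrite !hornerE /= expr0n /= expr1n; ring.
move: Hsum; rewrite Hc0 scale0r add0r.
have EX : forall j, E n (bump 0 j) = 'X * E (n - 2) j.
  by move=> j; rewrite /E /bump /= add1n exprS -mulrA -subnDA; congr (_ * (_ * _ ^+ _)); lia.
under eq_bigr => j _ do rewrite EX scalerAr.
rewrite -mulr_sumr => /eqP; rewrite mulf_eq0 polyX_eq0 /= => /eqP H.
case: i hi => [|j] hj //.
apply: (IH (n - 2)%N (fun k => c k.+1)) => //; lia.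
Qed.

Definition gseq n := mkseq (gm n) n./2.+1.

Lemma half_lt n i : (n./2 < i)%N -> (n < 2 * i)%N.
Proof. move=> h; have := odd_double_half n; rewrite -mul2n; case: (odd n) => /=; lia. Qed.

Lemma half_le n : (2 * n./2 <= n)%N.
Proof. have := odd_double_half n; rewrite -mul2n; case: (odd n) => /=; lia. Qed.

Lemma is_gseq n : is_gammaB n (gseq n).
Proof.
split; first by rewrite size_mkseq.
rewrite Bpoly_L -/(P n) P_S /S size_mkseq.
rewrite (big_ord_widen n.+1 (fun i => (gm n i)%:R * E n i)); last first.
  by have := half_le n; lia.
rewrite (bigID (fun i : 'I_n.+1 => (i < n./2.+1)%N)) /= [X in _ + X]big1 ?addr0; last first.
  move=> i /andP [_]; rewrite -leqNgt => h; rewrite gm0 ?mul0r //; exact: half_lt.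
rewrite [RHS](big_ord_widen n.+1 (fun i => (nth 0%N (gseq n) i)%:R *: ('X^i * (1 + 'X) ^+ (n - 2 * i)))); last first.
  by have := half_le n; lia.
apply: eq_big => [i|i /andP [_ hi]]; first by rewrite ltn_ord.
by rewrite nth_mkseq // scaler_nat mulr_natl.
Qed.

Lemma gammaB_eq n : gammaB n = gseq n.
Proof.
have := epsilon_spec (inhabits [::]) (is_gammaB n) (ex_intro _ _ (is_gseq n)).
rewrite -/(gammaB n) => -[Hs Hsum].
have [Hs' Hsum'] := is_gseq n.
apply: (@eq_from_nth _ 0%N); first by rewrite Hs Hs'.
move=> i; rewrite Hs => hi.
rewrite Hs in Hsum; rewrite Hs' in Hsum'.
have H0 := etrans (esym Hsum) Hsum'.
move/eqP: H0; rewrite -subr_eq0 -sumrB.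
under eq_bigr => j _ do rewrite -scalerBl.
move/eqP => H0.
have h2 : (2 * n./2.+1 <= n.+2)%N by have := half_le n; lia.
have := @uniq_coef n./2.+1 n (fun j => (nth 0%N (gammaB n) j)%:R - (nth 0%N (gseq n) j)%:R) h2 H0 i hi.
by move/eqP; rewrite subr_eq0 eqr_nat => /eqP.
Qed.

Lemma nth_gammaB n i : nth 0%N (gammaB n) i = gm n i.
Proof.
rewrite gammaB_eq /gseq; case: (ltnP i n./2.+1) => h; first by rewrite nth_mkseq.
by rewrite nth_default ?size_mkseq // gm0 //; apply: half_lt.
Qed.

Lemma size_gammaB n : size (gammaB n) = n./2.+1.
Proof. by rewrite gammaB_eq size_mkseq. Qed.

Lemma half_odd k : (2 * k + 1)./2 = k.
Proof. by have := half_bit_double k true; rewrite mul2n addn1. Qed.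

Lemma half_even k : (2 * k)./2 = k.
Proof. by rewrite mul2n doubleK. Qed.

Lemma gm_ge m i : (gm m i <= gm m.+1 i)%N.
Proof. apply: leq_trans (leq_addr _ _); rewrite -{1}(mul1n (gm m i)); apply: leq_mul => //; lia. Qed.

Lemma gm_ge2 m i : (i.+1 * gm m i <= gm m.+1 i)%N.
Proof. apply: leq_trans (leq_addr _ _); apply: leq_mul => //; lia. Qed.

Local Close Scope ring_scope.
Unset Implicit Arguments.
Set Strict Implicit.

Theorem lemma2p5 (d n : nat) (hd : 1 <= d) (hn : n = 2 * d + 1) (g : seq nat) :
  (good d (gammaB (n - 2)) g -> good d (gammaB (n - 1)) g) /\
  (good d.+1 (gammaB (n - 1)) g -> good d.+1 (gammaB n) g).
Proof.
case: d hd hn => [//|d] _ ->.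
have E2 : 2 * d.+1 + 1 - 2 = 2 * d + 1 by lia.
have E1 : 2 * d.+1 + 1 - 1 = (2 * d + 1).+1 by lia.
have E0 : 2 * d.+1 + 1 = (2 * d + 1).+2 by lia.
have S1 : ((2 * d + 1).+1)./2 = d.+1.
  by rewrite (_ : (2 * d + 1).+1 = 2 * d.+1) ?half_even //; lia.
have S2 : ((2 * d + 1).+2)./2 = d.+1.
  by rewrite (_ : (2 * d + 1).+2 = 2 * d.+1 + 1) ?half_odd //; lia.
rewrite E2 E1 E0; split.
  move=> [[Hs [Hg [Hnz [fs [Hfs Hsum]]]]] | [Hs _]]; last first.
    by move: Hs; rewrite size_gammaB half_odd; lia.
  right; split; first by rewrite size_gammaB S1.
  split; first exact: Hg. split; first exact: Hnz.
  exists fs; split; last exact: Hsum.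
  move=> fj /Hfs [Hf Hle]; split => // i.
  have := Hle i; rewrite !nth_gammaB => h.
  apply: leq_trans (gm_ge2 _ _); exact: leq_mul.
move=> [[Hs [Hg [Hnz [fs [Hfs Hsum]]]]] | [Hs _]]; last first.
  by move: Hs; rewrite size_gammaB S1; lia.
left; split; first by rewrite size_gammaB S2.
split; first exact: Hg. split; first exact: Hnz.
exists fs; split; last exact: Hsum.
move=> fj /Hfs [Hf Hle]; split => // i.
have := Hle i; rewrite !nth_gammaB => h.
exact: leq_trans h (gm_ge _ _).
Qed.
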